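(* Let $G$ be the direct sum of groups $\langle a_n\rangle$, $n\in\omega$, each of order $2$. Then $(a_n)_{n\in\omega}$ is a $T$-sequence on $G$, and the canonical bijection $F\mapsto\sum_{i\in F}a_i$ from the Hamming space $\mathbb{H}$ onto $(G,\mathcal{C}_{\tau(a_n)})$ is an asymorphism.
   Context: A sequence $(a_n)$ in an abelian group $G$ is a $T$-sequence if there is a Hausdorff group topology on $G$ in which $(a_n)\to0$; $\tau(a_n)$ is the strongest group topology on $G$ in which $(a_n)\to0$, and $\mathcal{C}_{\tau(a_n)}$ is the group ideal of precompact subsets of $(G,\tau(a_n))$, defining the coarse structure with base $\{\{(x,y):x\in A+y\}:A\in\mathcal{C}_{\tau(a_n)}\}$. The Hamming space $\mathbb{H}$ is the set of finite subsets of $\omega$ with metric $h(F,H)=|F\triangle H|$, with coarse structure generated by $\{(x,y):h(x,y)\le r\}$, $r\ge 0$. An asymorphism is a bijection $f$ such that $f$ and $f^{-1}$ are macro-uniform, where $f:(X,\mathcal{E})\to(X',\mathcal{E}')$ is macro-uniform if for each $E\in\mathcal{E}$ there is $E'\in\mathcal{E}'$ with $f(E[x])\subseteq E'[f(x)]$ for all $x$. *)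

(* Defs.v *)
From HB Require Import structures.
From mathcomp Require Import all_boot all_order all_algebra.
Set Implicit Arguments. Unset Strict Implicit. Unset Printing Implicit Defensive.
Import GRing.Theory.
Local Open Scope ring_scope.

Section Top.
Variable G : zmodType.

Definition is_topology (T : (G -> Prop) -> Prop) : Prop :=
  T (fun _ => True) /\
  (forall U V, T U -> T V -> T (fun x => U x /\ V x)) /\
  (forall F : (G -> Prop) -> Prop, (forall U, F U -> T U) ->
      T (fun x => exists U, F U /\ U x)).

Definition group_topology (T : (G -> Prop) -> Prop) : Prop :=
  is_topology T /\
  (forall x y U, T U -> U (x + y) ->
     exists V W, [/\ T V, T W, V x, W y &
       forall v w, V v -> W w -> U (v + w)]) /\
  (forall x U, T U -> U (- x) ->
     exists V, [/\ T V, V x & forall v, V v -> U (- v)]).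

Definition hausdorff (T : (G -> Prop) -> Prop) : Prop :=
  forall x y, x <> y -> exists U V, [/\ T U, T V, U x, V y &
     forall z, U z -> V z -> False].

Definition converges (T : (G -> Prop) -> Prop) (a : nat -> G) (l : G) : Prop :=
  forall U, T U -> U l -> exists N, forall n, (N <= n)%N -> U (a n).

Definition T_sequence (a : nat -> G) : Prop :=
  exists T, [/\ group_topology T, hausdorff T & converges T a 0].

Definition is_tau (a : nat -> G) (T : (G -> Prop) -> Prop) : Prop :=
  [/\ group_topology T, converges T a 0 &
      forall T', group_topology T' -> converges T' a 0 ->
                 forall U, T' U -> T U].

Definition precompact (T : (G -> Prop) -> Prop) (A : G -> Prop) : Prop :=
  forall U, T U -> U 0 ->
    exists s : seq G, forall x, A x -> exists2 g, g \in s & U (x - g).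

(* base of the coarse structure on G given by the ideal C_T of
   precompact subsets: {(x,y) : x ∈ A + y}, A ∈ C_T *)
Definition group_coarse_base (T : (G -> Prop) -> Prop) (E : G -> G -> Prop)
  : Prop :=
  exists A, precompact T A /\
    forall x y, E x y <-> exists2 z, A z & x = z + y.

End Top.

(* Every entourage is
   contained in a base entourage, so it suffices to quantify over bases. *)
Definition macro_uniform (X Y : Type) (BX : (X -> X -> Prop) -> Prop)
  (BY : (Y -> Y -> Prop) -> Prop) (f : X -> Y) : Prop :=
  forall E, BX E -> exists2 E', BY E' & forall x y, E x y -> E' (f x) (f y).

Definition asymorphism (X Y : Type) (BX : (X -> X -> Prop) -> Prop)
  (BY : (Y -> Y -> Prop) -> Prop) (f : X -> Y) : Prop :=
  exists g : Y -> X, [/\ cancel f g, cancel g f,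
     macro_uniform BX BY f & macro_uniform BY BX g].

(** * The Hamming space: finite subsets of omega, as strictly increasing lists *)
Definition finset_nat := {s : seq nat | sorted ltn s}.

Definition hamming (F H : finset_nat) : nat :=
  (count (fun x => x \notin sval H) (sval F) +
   count (fun x => x \notin sval F) (sval H))%N.

(* base {(x,y) : h(x,y) <= r}, r >= 0 (h is integer-valued, so r : nat) *)
Definition hamming_base (E : finset_nat -> finset_nat -> Prop) : Prop :=
  exists r : nat, forall F H, E F H <-> (hamming F H <= r)%N.

Definition canon (G : zmodType) (a : nat -> G) (F : finset_nat) : G :=
  \sum_(i <- sval F) a i.

(* Main.v *)
Require Import Defs.
From HB Require Import structures.
From mathcomp Require Import all_boot all_order all_algebra.
From Stdlib Require Import Classical ClassicalEpsilon Lia.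
From mathcomp Require Import zify.
Import GRing.Theory.
Local Open Scope ring_scope.

Section Topo.
Variable G : zmodType.
Variable I : Type.
Variable W : I -> G -> Prop.
Variable i0 : I.
Hypothesis H0 : forall i, W i 0.
Hypothesis Hneg : forall i x, W i x -> W i (- x).
Hypothesis Hadd : forall i, exists j, forall x y, W j x -> W j y -> W i (x + y).
Hypothesis Hmeet : forall i i', exists j, forall x, W j x -> W i x /\ W i' x.

Definition topo : (G -> Prop) -> Prop :=
  fun U => forall x, U x -> exists i, forall w, W i w -> U (x + w).
Definition ball i (x : G) : G -> Prop :=
  fun u => exists j, forall w, W j w -> W i (u - x + w).

Lemma ball_open i x : topo (ball i x).
Proof.
move=> u [j Hj]; have [j' Hj'] := Hadd j.
exists j' => w Hw; exists j' => w' Hw'.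
have -> : u + w - x + w' = u - x + (w + w') by rewrite -!addrA; congr (_ + _); rewrite addrCA.
apply: Hj; exact: Hj'.
Qed.

Lemma ball_center i x : ball i x x.
Proof. by exists i => w Hw; rewrite subrr add0r. Qed.

Lemma ball_sub i x u : ball i x u -> W i (u - x).
Proof. by move=> [j Hj]; have := Hj 0 (H0 j); rewrite addr0. Qed.
Arguments ball_sub {i x u}.

Lemma addsub (x v : G) : x + (v - x) = v.
Proof. by rewrite addrC subrK. Qed.

Lemma topo_group : group_topology topo.
Proof.
split; [split; [|split]|split].
- by move=> x _; exists i0.
- move=> U V HU HV x [Ux Vx].
  have [i Hi] := HU x Ux; have [i' Hi'] := HV x Vx.
  have [j Hj] := Hmeet i i'.
  by exists j => w /Hj [w1 w2]; split; [apply: Hi | apply: Hi'].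
- move=> F HF x [U [FU Ux]].
  have [i Hi] := HF U FU x Ux.
  by exists i => w Hw; exists U; split => //; apply: Hi.
- move=> x y U HU Uxy.
  have [i Hi] := HU _ Uxy; have [j Hj] := Hadd i.
  exists (ball j x), (ball j y); split; try exact: ball_open; try exact: ball_center.
  move=> v w Hv Hw.
  have := Hi _ (Hj _ _ (ball_sub Hv) (ball_sub Hw)).
  by rewrite addrACA !addsub.
- move=> x U HU Ux.
  have [i Hi] := HU _ Ux.
  exists (ball i x); split; [exact: ball_open | exact: ball_center |].
  move=> v Hv; have := Hi _ (Hneg _ _ (ball_sub Hv)).
  by rewrite opprB addKr.
Qed.

Lemma topo_haus : (forall z, z != 0 -> exists i, ~ W i z) -> hausdorff topo.
Proof.
move=> Hsep x y Hxy.
have [i Hi] : exists i, ~ W i (x - y).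
  by apply: Hsep; rewrite subr_eq0; apply/eqP.
have [j Hj] := Hadd i.
exists (ball j x), (ball j y); split; try exact: ball_open; try exact: ball_center.
move=> z Uz Vz; apply: Hi.
have := Hj _ _ (ball_sub Vz) (Hneg _ _ (ball_sub Uz)).
by rewrite opprB addrC addrA subrK.
Qed.

Lemma topo_conv (b : nat -> G) :
  (forall i, exists N, forall n, (N <= n)%N -> W i (b n)) -> converges topo b 0.
Proof.
move=> Hc U HU U0; have [i Hi] := HU 0 U0; have [N HN] := Hc i.
by exists N => n Hn; have := Hi _ (HN n Hn); rewrite add0r.
Qed.

End Topo.
Arguments topo {G I}.
Arguments ball {G I}.
Arguments ball_open {G I W}.
Arguments ball_center {G I W}.
Arguments ball_sub {G I W} H0 {i x u}.
Arguments topo_group {G I W}.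
Arguments topo_haus {G I W}.
Arguments topo_conv {G I W}.

Section Main.

Variable G : zmodType.
Variable a : nat -> G.
Hypothesis Ha2 : forall n, a n + a n = 0.
Variable g : G -> finset_nat.
Hypothesis gK : cancel (canon a) g.
Hypothesis Kg : cancel g (canon a).

Notation S l := (\sum_(i <- l) a i).

Lemma oppa i : - a i = a i.
Proof. by apply/eqP; rewrite eq_sym -subr_eq0 opprK Ha2. Qed.

Lemma oppx (x : G) : - x = x.
Proof.
by rewrite -(Kg x) /canon -sumrN; apply: eq_bigr => i _; rewrite oppa.
Qed.

Lemma xx (x : G) : x + x = 0.
Proof. by rewrite -{2}(oppx x) subrr. Qed.

Lemma canon_sorted (K : seq nat) (pK : sorted ltn K) : sval (g (S K)) = K.
Proof.
have -> : S K = canon a (exist _ K pK) by [].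
by rewrite gK.
Qed.

Lemma normalize (l : seq nat) :
  exists K, [/\ sorted ltn K, S K = S l & {subset K <= l}].
Proof.
elim: l => [|i l [K [sK eK subK]]].
  by exists [::]; split => //; rewrite !big_nil.
case: (boolP (i \in K)) => iK.
  exists (rem i K); split.
  - by apply: (subseq_sorted _ (rem_subseq i K)) sK => x y z; apply: ltn_trans.
  - rewrite big_cons -eK (perm_big _ (perm_to_rem iK)) big_cons addrA Ha2.
    by rewrite add0r.
  - move=> j /mem_rem jK; rewrite in_cons; apply/orP; right; exact: subK.
exists (sort leq (i :: K)); split.
- rewrite ltn_sorted_uniq_leq sort_uniq sort_sorted ?andbT; last exact: leq_total.
  by rewrite /= iK (sorted_uniq ltn_trans ltnn sK).
- by rewrite (perm_big _ (permEl (perm_sort leq _))) !big_cons eK.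
- move=> j; rewrite mem_sort !in_cons => /orP [->//|/subK ->]; by rewrite orbT.
Qed.

Lemma g_subset (l : seq nat) : {subset sval (g (S l)) <= l}.
Proof.
have [K [sK eK subK]] := normalize l.
by rewrite -eK canon_sorted.
Qed.

Lemma g_uniq (K : seq nat) : uniq K -> sval (g (S K)) = sort leq K.
Proof.
move=> uK.
have sK : sorted ltn (sort leq K).
  by rewrite ltn_sorted_uniq_leq sort_uniq uK sort_sorted //; exact: leq_total.
by rewrite -(canon_sorted _ sK) (perm_big _ (permEl (perm_sort leq _))).
Qed.


Lemma foldr_max (s : seq nat) x : x \in s -> (x <= foldr maxn 0 s)%N.
Proof.
elim: s => // y s IH; rewrite in_cons => /orP [/eqP -> | /IH H] /=.
  exact: leq_maxl.
exact: leq_trans H (leq_maxr _ _).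
Qed.

Definition Wc (n : nat -> nat) (x : G) : Prop :=
  exists s : seq nat, x = S s /\ forall k, (count (fun i => i < n k) s <= k)%N.

Lemma Wc0 n : Wc n 0.
Proof. by exists [::]; rewrite big_nil. Qed.

Lemma Wcneg n x : Wc n x -> Wc n (- x).
Proof. by rewrite oppx. Qed.

Lemma Wcadd n : exists m, forall x y, Wc m x -> Wc m y -> Wc n (x + y).
Proof.
exists (fun j => foldr maxn 0 (map n (iota 0 (j + j).+2))).
move=> x y [s [-> Hs]] [t [-> Ht]]; exists (s ++ t); split; first by rewrite big_cat.
move=> k; rewrite count_cat.
have le : (n k <= foldr maxn 0 (map n (iota 0 (k %/ 2 + k %/ 2).+2)))%N.
  apply: foldr_max; apply: map_f; rewrite mem_iota add0n /=; lia.
have Hc u (Hu : forall k, (count (fun i => i < foldr maxn 0 (map n (iota 0 (k + k).+2))) u <= k)%N) :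
    (count (fun i => i < n k) u <= k %/ 2)%N.
  apply: (leq_trans _ (Hu (k %/ 2)%N)); apply: sub_count => i /= Hi; exact: leq_trans Hi le.
have := Hc s Hs; have := Hc t Ht; lia.
Qed.

Lemma Wcmeet n n' : exists m, forall x, Wc m x -> Wc n x /\ Wc n' x.
Proof.
exists (fun k => maxn (n k) (n' k)) => x [s [-> Hs]]; split; exists s; split => // k;
  apply: (leq_trans _ (Hs k)); apply: sub_count => i /= Hi.
  exact: leq_trans Hi (leq_maxl _ _).
exact: leq_trans Hi (leq_maxr _ _).
Qed.

Lemma Wcconv n : exists N, forall i, (N <= i)%N -> Wc n (a i).
Proof.
exists (n 0%N) => i Hi; exists [:: i]; split; first by rewrite big_cons big_nil addr0.
move=> [|k] /=; first by rewrite ltnNge Hi.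
by case: (i < n k.+1)%N.
Qed.

Lemma Wcsep z : z != 0 -> exists n, ~ Wc n z.
Proof.
move=> z0; case eF: (sval (g z)) => [|i F'].
  by move/eqP: z0; case; rewrite -(Kg z) /canon eF big_nil.
exists (fun _ => (foldr maxn 0 (i :: F')).+1) => [[s [zs Hs]]].
have iF : i \in sval (g (S s)) by rewrite -zs eF mem_head.
have iS := g_subset s _ iF.
have : (0 < count (fun j => j < (foldr maxn 0 (i :: F')).+1) s)%N.
  rewrite -has_count; apply/hasP; exists i => //=.
  by rewrite ltnS leq_maxl.
by move: (Hs 0%N); rewrite leqn0 => /eqP ->.
Qed.

Lemma ham (F H : finset_nat) :
  exists K, [/\ uniq K, size K = hamming F H & S K = canon a F + canon a H].
Proof.
have uF : uniq (sval F) by apply: (sorted_uniq ltn_trans ltnn); exact: (proj2_sig F).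
have uH : uniq (sval H) by apply: (sorted_uniq ltn_trans ltnn); exact: (proj2_sig H).
exists ([seq i <- sval F | i \notin sval H] ++ [seq i <- sval H | i \notin sval F]); split.
- rewrite cat_uniq !filter_uniq //= andbT; apply/hasP => [[j]].
  rewrite !mem_filter => /andP [jnF _] /andP [_ jF]; by rewrite jF in jnF.
- by rewrite size_cat !size_filter.
- have eF : canon a F = \sum_(i <- sval F | i \in sval H) a i + \sum_(i <- sval F | i \notin sval H) a i.
    by rewrite /canon (bigID (fun i => i \in sval H)).
  have eH : canon a H = \sum_(i <- sval H | i \in sval F) a i + \sum_(i <- sval H | i \notin sval F) a i.
    by rewrite /canon (bigID (fun i => i \in sval F)).
  have bc (l1 l2 : seq nat) : S (l1 ++ l2) = S l1 + S l2 by rewrite big_cat.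
  rewrite bc !big_filter eF eH.
  have -> : \sum_(i <- sval F | i \in sval H) a i = \sum_(i <- sval H | i \in sval F) a i.
    rewrite -[LHS]big_filter -[RHS]big_filter; apply: perm_big; apply: uniq_perm; rewrite ?filter_uniq //.
    by move=> j; rewrite !mem_filter andbC.
  by rewrite addrACA xx add0r.
Qed.

Definition Ar r (x : G) := exists l : seq nat, (size l <= r)%N /\ x = S l.

Lemma smallV T : group_topology T -> forall r U, T U -> U 0 ->
  exists V, [/\ T V, V 0 & forall l, (size l <= r)%N ->
     (forall i, i \in l -> V (a i)) -> U (S l)].
Proof.
move=> [[Ttop [Tint Tun]] [Tadd Tneg]] r.
elim: r => [|r IH] U HU U0.
  by exists U; split=> // l; rewrite leqn0 => /nilP -> _; rewrite big_nil.
have U00 : U (0 + 0) by rewrite addr0.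
have [V1 [W1 [TV1 TW1 V10 W10 HVW]]] := Tadd 0 0 U HU U00.
have [V2 [TV2 V20 HV2]] := IH W1 TW1 W10.
exists (fun x => V1 x /\ V2 x); split; [exact: Tint | by split |].
move=> [_ _|i l]; first by rewrite big_nil.
rewrite /= ltnS => Hl Hin; rewrite big_cons; apply: HVW.
  exact: (Hin i (mem_head _ _)).1.
apply: HV2 Hl _ => j jl; apply: (Hin j _).2; by rewrite in_cons jl orbT.
Qed.

Fixpoint lists (N r : nat) : seq (seq nat) :=
  if r is r'.+1 then [::] :: [seq i :: l | i <- iota 0 N, l <- lists N r']
  else [:: [::]].

Lemma mem_lists N r l : (size l <= r)%N -> (forall i, i \in l -> i < N)%N ->
  l \in lists N r.
Proof.
elim: r l => [|r IH] [|i l] //=; try by rewrite inE.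
rewrite ltnS => Hl Hi; rewrite in_cons; apply/orP; right.
apply: (allpairs_f (fun i l => i :: l)).
  by rewrite mem_iota add0n; apply: Hi; rewrite mem_head.
by apply: IH Hl _ => j jl; apply: Hi; rewrite in_cons jl orbT.
Qed.

Lemma precompact_Ar T : group_topology T -> converges T a 0 ->
  forall r, precompact T (Ar r).
Proof.
move=> gT cT r U TU U0.
have [V [TV V0 HV]] := smallV _ gT r _ TU U0.
have [N HN] := cT V TV V0.
exists [seq S l | l <- lists N r] => x [l [Hl ->]].
exists (\sum_(i <- l | (i < N)%N) a i).
  rewrite -big_filter; apply: map_f; apply: mem_lists.
    by rewrite size_filter; apply: leq_trans (count_size _ _) Hl.
  by move=> i; rewrite mem_filter => /andP [].
have -> : S l - \sum_(i <- l | (i < N)%N) a i = \sum_(i <- l | ~~ (i < N)%N) a i.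
  by rewrite (bigID (fun i => (i < N)%N)) /= addrC addrK.
rewrite -big_filter; apply: HV.
  by rewrite size_filter; apply: leq_trans (count_size _ _) Hl.
by move=> i; rewrite mem_filter => /andP [Hi _]; apply: HN; rewrite leqNgt.
Qed.

Lemma sum_ge (T : eqType) (f : T -> nat) s y : y \in s -> (f y <= \sum_(x <- s) f x)%N.
Proof.
elim: s => // x s IH; rewrite in_cons big_cons => /orP [/eqP -> | /IH H].
  exact: leq_addr.
exact: leq_trans H (leq_addl _ _).
Qed.

Lemma Wtopo_group : group_topology (topo Wc).
Proof. exact: (topo_group (fun _ => 0%N) Wc0 Wcneg Wcadd Wcmeet). Qed.

Lemma Wtopo_conv : converges (topo Wc) a 0.
Proof. by apply: topo_conv => n; apply: Wcconv. Qed.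

Lemma bound T (HT : is_tau a T) A (HA : precompact T A) :
  exists r, forall z, A z -> (size (sval (g z)) <= r)%N.
Proof.
have HA' : precompact (topo Wc) A.
  move=> U TU U0; apply: HA => //; case: HT => _ _ Hmax.
  exact: (Hmax _ Wtopo_group Wtopo_conv).
apply: NNPP => Hno.
have Hx : forall r, exists z, A z /\ (r < size (sval (g z)))%N.
  move=> r; apply: NNPP => Hr; apply: Hno; exists r => z Az.
  rewrite leqNgt; apply/negP => Hlt; apply: Hr; by exists z.
pose X r := proj1_sig (constructive_indefinite_description _ (Hx r)).
have HX r : A (X r) /\ (r < size (sval (g (X r))))%N :=
  proj2_sig (constructive_indefinite_description _ (Hx r)).
pose F j := sval (g (X j)).
pose n k := (foldr maxn 0 (F (k + k)%N)).+1.
have [s Hs] := HA' (ball Wc n 0) (ball_open Wcadd n 0) (ball_center (W:=Wc) n 0).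
pose L := (\sum_(y <- s) size (sval (g y)))%N.
pose k := L.+1.
have [Ak Sk] := HX (k + k)%N.
have Sk' : (k + k < size (F (k + k)))%N := Sk.
have [y ys Hy] := Hs _ Ak.
have [t [et Ht]] : Wc n (X (k + k)%N - y).
  by have := ball_sub Wc0 Hy; rewrite subr0.
pose G' := sval (g y).
have eX : X (k + k)%N = S (t ++ G').
  rewrite big_cat -et; have := Kg y; rewrite /canon => ->; exact/esym/subrK.
have sub : {subset F (k + k)%N <= t ++ G'}.
  move=> i iF; apply: g_subset; rewrite -eX; exact: iF.
have uF : uniq (F (k + k)%N).
  by apply: (sorted_uniq ltn_trans ltnn); exact: (proj2_sig (g _)).
have c1 : (count (fun i => i \in G') (F (k + k)%N) <= size G')%N.
  rewrite -size_filter; apply: uniq_leq_size; first exact: filter_uniq.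
  by move=> i; rewrite mem_filter => /andP [].
have c2 : (count (predC (fun i => i \in G')) (F (k + k)%N) <=
           count (fun i => i < n k) t)%N.
  rewrite -!size_filter; apply: uniq_leq_size; first exact: filter_uniq.
  move=> i; rewrite !mem_filter /= => /andP [iG iF]; apply/andP; split.
    by rewrite /n ltnS; apply: foldr_max.
  by have := sub i iF; rewrite mem_cat (negbTE iG) orbF.
have c3 : (size G' <= L)%N by exact: (sum_ge _ (fun y => size (sval (g y))) s y ys).
have c4 := count_predC (fun i => i \in G') (F (k + k)%N).
have c5 := Ht k.
have kdef : k = L.+1 by [].
have e1 := leq_add c1 c2. rewrite c4 in e1. have e2 : (size (F (k + k)) <= size G' + count (fun i => i < n k) t)%N := e1. clear -Sk' e2 c3 c5 kdef. clearbody k L n F X G'. lia.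
Qed.


Lemma Tseq : T_sequence a.
Proof.
exists (topo Wc); split.
- exact: Wtopo_group.
- exact: (topo_haus Wc0 Wcneg Wcadd Wcsep).
- exact: Wtopo_conv.
Qed.

Lemma asym T : is_tau a T -> asymorphism hamming_base (group_coarse_base T) (canon a).
Proof.
move=> HT; have [gT cT _] := HT.
exists g; split => //.
- move=> E [r Hr].
  exists (fun x y => exists2 z, Ar r z & x = z + y).
    by exists (Ar r); split => //; apply: precompact_Ar.
  move=> F H /Hr Hh; have [K [uK sK eK]] := ham F H.
  exists (\sum_(i <- K) a i); first by exists K; split => //; rewrite sK.
  by rewrite eK -addrA xx addr0.
- move=> E [A [pA HE]].
  have [r Hr] := bound _ HT _ pA.
  exists (fun F H => (hamming F H <= r)%N); first by exists r.
  move=> x y /HE [z Az ->].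
  have [K [uK sK eK]] := ham (g (z + y)) (g y).
  rewrite !Kg -addrA xx addr0 in eK.
  rewrite -sK -(size_sort leq K) -(g_uniq _ uK) eK.
  exact: Hr.
Qed.

End Main.

Theorem mainTheorem10 (G : zmodType) (a : nat -> G)
  (Ha2 : forall n, a n + a n = 0)
  (Hsum : bijective (canon a)) :
  T_sequence a /\
  (forall T, is_tau a T ->
     asymorphism hamming_base (group_coarse_base T) (canon a)).
Proof.
have [g gK Kg] := Hsum.
split; first exact: (Tseq _ _ Ha2 _ gK Kg).
move=> T HT; exact: (asym _ _ Ha2 _ gK Kg _ HT).
Qed.
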